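(* Let $\tau\in[0,1]$ and let $e$ be a Gaussian random vector in $\mathbb{R}^n$ with mean $m_e$ and positive semidefinite covariance $K_e$. Then: (i) $\mathcal{H}_\tau(e,\lambda)\ge0$, with equality if and only if $e=0$ (i.e. $m_e=0$ and $K_e=0$); (ii) $\lambda\mapsto\mathcal{H}_\tau(e,\lambda)$ is a monotone decreasing function.
   Context: The $\tau$ entropy is defined, for $\lambda>0$ with $\lambda>(1-\tau)\|K_e\|$ ($\|\cdot\|$ the spectral norm), by $\mathcal{H}_0(e,\lambda)=m_e^T(I_n-\frac1\lambda K_e)^{-1}m_e-\lambda\log\det(I_n-\frac1\lambda K_e)$; for $0<\tau<1$, $\mathcal{H}_\tau(e,\lambda)=m_e^T(I_n-\frac{1-\tau}\lambda K_e)^{-1}m_e+\frac\lambda\tau\mathrm{tr}\big((I_n-\frac{1-\tau}\lambda K_e)^{\frac\tau{\tau-1}}-I_n\big)$; $\mathcal{H}_1(e,\lambda)=m_e^Tm_e+\lambda\,\mathrm{tr}(\exp(\frac1\lambda K_e)-I_n)$; and $\mathcal{H}_\tau(e,\lambda)=\infty$ for other $\lambda$. *)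

(* Defs.v *)
From HB Require Import structures.
From mathcomp Require Import all_boot all_order all_algebra.
From mathcomp Require Import all_classical all_reals all_analysis.
Set Implicit Arguments. Unset Strict Implicit. Unset Printing Implicit Defensive.
Import Order.TTheory GRing.Theory Num.Theory.
Local Open Scope ring_scope.
Local Open Scope classical_set_scope.

Section TauEntropy.
Variables (R : realType) (n : nat).

Definition qform (A : 'M[R]_n) (v : 'cV[R]_n) : R := (v^T *m A *m v) 0 0.

Definition psd (A : 'M[R]_n) : Prop :=
  A^T = A /\ forall v : 'cV[R]_n, 0 <= qform A v.

Definition specnorm (A : 'M[R]_n) : R :=
  sup [set Num.sqrt (qform (A^T *m A) x) | x in [set x : 'cV[R]_n | qform 1%:M x = 1]].

Definition spec_decomp (A : 'M[R]_n) (Ud : 'M[R]_n * 'rV[R]_n) : Prop :=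
  Ud.1^T *m Ud.1 = 1%:M /\ A = Ud.1 *m diag_mx Ud.2 *m Ud.1^T.

Definition mxfun (f : R -> R) (A : 'M[R]_n) : 'M[R]_n :=
  match pselect (exists Ud, spec_decomp A Ud) with
  | left h => let Ud := projT1 (cid h) in
              Ud.1 *m diag_mx (map_mx f Ud.2) *m Ud.1^T
  | right _ => A
  end.

Definition Hfin (tau : R) (m : 'cV[R]_n) (K : 'M[R]_n) (lam : R) : R :=
  if tau == 0 then
    qform (invmx (1%:M - lam^-1 *: K)) m - lam * ln (\det (1%:M - lam^-1 *: K))
  else if tau == 1 then
    qform 1%:M m + lam * \tr (mxfun expR (lam^-1 *: K) - 1%:M)
  else
    qform (invmx (1%:M - ((1 - tau) / lam) *: K)) m
    + lam / tau * \tr (mxfun (fun x => x `^ (tau / (tau - 1)))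
                              (1%:M - ((1 - tau) / lam) *: K) - 1%:M).

(* the tau entropy H_tau(e, lambda) of a Gaussian vector e with mean m and
   covariance K, with value +oo outside lambda > 0, lambda > (1-tau)||K|| *)
Definition Htau (tau : R) (m : 'cV[R]_n) (K : 'M[R]_n) (lam : R) : \bar R :=
  if (0 < lam) && ((1 - tau) * specnorm K < lam) then (Hfin tau m K lam)%:E
  else +oo%E.

End TauEntropy.

(* Main.v *)
Require Import Defs.
From HB Require Import structures.
From mathcomp Require Import all_boot all_order all_algebra.
From mathcomp Require Import all_classical all_reals all_analysis.
From mathcomp Require Import ring lra.
From mathcomp Require Import complex spectral sesquilinear.
Set Implicit Arguments. Unset Strict Implicit. Unset Printing Implicit Defensive.
Import Order.TTheory GRing.Theory Num.Theory.
Local Open Scope ring_scope.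
Local Open Scope classical_set_scope.

Section S.
Variable R : realType.

Lemma trZ m n (c : R) (M : 'M[R]_(m,n)) : (c *: M)^T = c *: M^T.
Proof. by apply/matrixP => i j; rewrite !mxE. Qed.

Lemma mx11E (A : 'M[R]_1) : A = (A 0 0)%:M.
Proof. by apply/matrixP => i j; rewrite (ord1 i) (ord1 j) !mxE. Qed.

Lemma trmx_col_mul n (u v : 'cV[R]_n) : (u^T *m v) 0 0 = \sum_i u i 0 * v i 0.
Proof. by rewrite mxE; apply: eq_bigr => i _; rewrite mxE. Qed.

Lemma sq_eq0 n (w : 'cV[R]_n) : (w^T *m w) 0 0 = 0 -> w = 0.
Proof.
rewrite trmx_col_mul => /eqP; rewrite psumr_eq0 => [/allP h|i _]; last by rewrite -expr2 sqr_ge0.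
apply/matrixP => i j; rewrite (ord1 j) mxE.
by have := h i (mem_index_enum _); rewrite /= mulf_eq0 orbb => /eqP.
Qed.

Lemma householder n (x : 'cV[R]_n.+1) : x^T *m x = 1%:M ->
  exists H : 'M[R]_n.+1, H^T = H /\ H *m H = 1%:M /\ H *m col 0 1%:M = x.
Proof.
move=> xx.
set e := col 0 (1%:M : 'M[R]_n.+1).
have ee : e^T *m e = 1%:M.
  rewrite [LHS]mx11E trmx_col_mul (bigD1 0) //= big1 => [|i ne].
    by rewrite !mxE eqxx mulr1 addr0.
  by rewrite !mxE (negbTE ne) mulr0.
have xe : x^T *m e = (x 0 0)%:M.
  rewrite [LHS]mx11E trmx_col_mul (bigD1 0) //= big1 => [|i ne].
    by rewrite !mxE eqxx mulr1 addr0.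
  by rewrite !mxE (negbTE ne) mulr0.
have ex : e^T *m x = (x 0 0)%:M.
  by have := congr1 trmx xe; rewrite trmx_mul trmxK tr_scalar_mx.
set w := x - e.
have trB : w^T = x^T - e^T by apply/matrixP=> i j; rewrite !mxE.
set s := (w^T *m w) 0 0.
have ww : w^T *m w = s%:M by rewrite [LHS]mx11E.
have s_eq : s = 2 - 2 * x 0 0.
  rewrite /s /w trB mulmxBl !mulmxBr xx ee xe ex !mxE eqxx /=.
  rewrite !mulr1n; lra.
have [s0|s0] := eqVneq s 0.
  exists 1%:M; rewrite trmx1 mul1mx; split => //; split => //.
  by have := sq_eq0 s0; move=> /eqP; rewrite subr_eq0 mul1mx => /eqP ->.
set c := 2 / s.
exists (1%:M - c *: (w *m w^T)); split.
  by rewrite linearB /= trmx1 linearZ /= trmx_mul trmxK.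
split.
  have WW : w *m w^T *m (w *m w^T) = s *: (w *m w^T).
    by rewrite mulmxA -(mulmxA w) ww mul_mx_scalar -scalemxAl.
  rewrite mulmxBl !mulmxBr mul1mx mulmx1 -!scalemxAl -!scalemxAr WW scalerA.
  rewrite mul1mx scalerA.
  have -> : c * c * s = c + c by rewrite /c; field.
  by rewrite scalerDl opprB addrK subrK.
rewrite mulmxBl mul1mx -scalemxAl -mulmxA.
have we : w^T *m e = (x 0 0 - 1)%:M.
  by rewrite trB mulmxBl xe ee raddfB.
rewrite we mul_mx_scalar scalerA.
have -> : c * (x 0 0 - 1) = -1.
  rewrite /c s_eq; field.
  by move: s0; rewrite s_eq; apply: contra => /eqP ->.
by rewrite scaleN1r opprK /w addrC subrK.
Qed.
Lemma sym_eigen n (A : 'M[R]_n.+1) : A^T = A ->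
  exists a (v : 'rV[R]_n.+1), v != 0 /\ v *m A = a *: v.
Proof.
move=> As.
pose f := real_complex R.
pose Ac := map_mx f A.
have Aherm : Ac \is hermsymmx.
  apply: realsym_hermsym.
    apply/is_hermitianmxP; rewrite expr0 scale1r map_mx_id // /Ac map_trmx As //.
  by apply/mxOverP => i j; rewrite mxE; apply/complex_realP; eexists.
have dreal := hermitian_spectral_diag_real Aherm.
have /orthomx_spectralP Aeq := hermitian_normalmx Aherm.
set P := spectralmx Ac in Aeq; set d := spectral_diag Ac in Aeq dreal.
have Pu : P \in unitmx by exact: spectral_unit.
have eig : eigenvalue Ac (d 0 0).
  apply/eigenvalueP; exists (row 0 P).
    rewrite Aeq !mulmxA -row_mul mulmxV // -row_mul mul1mx.
    have -> : row 0 (diag_mx d) = d 0 0 *: row 0 (1%:M : 'M[R[i]]_(n.+1)).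
      by apply/rowP=> j; rewrite !mxE mulr_natr.
    by rewrite -scalemxAl -row_mul mul1mx.
  apply/negP => /eqP h; have := congr1 (mulmx^~ (invmx P)) h.
  rewrite /= -row_mul mulmxV // mul0mx => /rowP/(_ 0); rewrite !mxE eqxx /=.
  by move=> /eqP; rewrite oner_eq0.
have : root (char_poly Ac) (d 0 0) by rewrite -eigenvalue_root_char.
have dR : d 0 0 \is Num.real by apply: (mxOverP dreal).
rewrite -(RRe_real dR) /Ac -map_char_poly fmorph_root -eigenvalue_root_char.
move=> /eigenvalueP [v vA vn0]; by exists (complex.Re (d 0 0)), v.
Qed.

Lemma spectral_real n (A : 'M[R]_n) : A^T = A ->
  exists (U : 'M[R]_n) (d : 'rV[R]_n), U^T *m U = 1%:M /\ A = U *m diag_mx d *m U^T.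
Proof.
elim: n A => [|n IH] A As.
  exists 1%:M, 0; rewrite trmx1 mul1mx; split => //.
  by apply/matrixP => -[].
have [a [v [vn0 vA]]] := sym_eigen As.
set s := (v *m v^T) 0 0.
have s_gt0 : 0 < s.
  rewrite lt_neqAle; apply/andP; split.
    apply/eqP => /esym s0; apply/negP: vn0; apply/negPn/eqP.
    apply: trmx_inj; rewrite trmx0; apply: sq_eq0; by rewrite trmxK.
  rewrite /s mxE sumr_ge0 // => i _; rewrite mxE -expr2 sqr_ge0 //.
set x := (Num.sqrt s)^-1 *: v^T.
have xx : x^T *m x = 1%:M.
  rewrite /x trZ trmxK -scalemxAl -scalemxAr scalerA [v *m v^T]mx11E.
  rewrite -/s scale_scalar_mx (_ : _ * s = 1) //.
  rewrite -invfM -expr2 sqr_sqrtr ?ltW // mulVf //; exact: lt0r_neq0.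
have Ax : A *m x = a *: x.
  rewrite /x -scalemxAr scalerA mulrC -scalerA; congr (_ *: _).
  by rewrite -{1}As -trmx_mul vA trZ.
have [H [Hs [HH He]]] := householder xx.
set e := col 0 (1%:M : 'M[R]_n.+1) in He.
set B := H *m A *m H.
have Bs : B^T = B by rewrite /B !trmx_mul Hs As mulmxA.
have Be : B *m e = a *: e.
  have Hx : H *m x = e by rewrite -He mulmxA HH mul1mx.
  by rewrite /B -mulmxA He -mulmxA Ax -scalemxAr Hx.
have Bdef : B = H *m A *m H by [].
clearbody B.
have Bi0 : forall i, B i 0 = a * (i == 0)%:R.
  move=> i; have /matrixP/(_ i 0) := Be; rewrite !mxE /= => <-.
  rewrite (bigD1 0) //= big1 => [|j ne]; first by rewrite !mxE eqxx mulr1 addr0.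
  by rewrite !mxE (negbTE ne) mulr0.
have l0 : forall i : 'I_1, lshift n i = 0 :> 'I_n.+1.
  by move=> i; apply/val_inj; rewrite /= (ord1 i).
have r0 : forall i : 'I_n, (rshift 1 i == 0 :> 'I_n.+1) = false.
  by move=> i; apply/negbTE; rewrite -val_eqE.
pose B' := drsubmx (B : 'M[R]_(1 + n)).
have Bblk : (B : 'M[R]_(1+n)) = block_mx (a%:M : 'M[R]_1) 0 0 B'.
  rewrite -[B in LHS](submxK (B : 'M[R]_(1+n))); congr block_mx.
  - apply/matrixP => i j; rewrite (ord1 i) (ord1 j) !mxE l0 Bi0 eqxx; by rewrite mulr1.
  - apply/matrixP => i j; rewrite !mxE -Bs mxE l0 Bi0 r0; by rewrite mulr0.
  - apply/matrixP => i j; rewrite !mxE l0 Bi0 r0; by rewrite mulr0.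
have B's : B'^T = B' by rewrite /B' trmx_drsub Bs.
have [V [e' [VV B'eq]]] := IH _ B's.
exists (H *m (block_mx 1%:M 0 0 V : 'M[R]_(1+n))), (row_mx (a%:M : 'rV[R]_1) e'); split.
  rewrite trmx_mul Hs (@tr_block_mx _ 1 n 1 n) !trmx0 trmx1 mulmxA -(mulmxA _ H H) HH mulmx1.
  rewrite (@mulmx_block _ 1 n 1 n 1 n) !mulmx0 !mul0mx !addr0 !add0r mulmx1 VV.
  by rewrite -scalar_mx_block.
rewrite trmx_mul Hs (@tr_block_mx _ 1 n 1 n) !trmx0 trmx1 (@diag_mx_row _ n 1).
have M : (block_mx 1%:M 0 0 V : 'M[R]_(1+n)) *m block_mx (diag_mx (a%:M : 'rV[R]_1)) 0 0 (diag_mx e')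
    *m block_mx 1%:M 0 0 V^T = B.
  rewrite !mulmx_block !mulmx0 !mul0mx !addr0 !add0r !mul1mx !mulmx1.
  have -> : diag_mx (a%:M : 'rV[R]_1) = a%:M.
    by apply/matrixP => i j; rewrite (ord1 i) (ord1 j) !mxE.
  by rewrite mul0mx -B'eq -Bblk.
rewrite !mulmxA -(mulmxA H) -(mulmxA H) M Bdef.
by rewrite !mulmxA HH mul1mx -mulmxA HH mulmx1.
Qed.

Lemma char_poly_decomp n (A U : 'M[R]_n) (d : 'rV[R]_n) :
  U^T *m U = 1%:M -> A = U *m diag_mx d *m U^T ->
  char_poly A = \prod_(i < n) ('X - (d 0 i)%:P).
Proof.
move=> UU Aeq.
have UUt : U *m U^T = 1%:M by apply: mulmx1C.
set Up := map_mx polyC U.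
have UpUp : Up *m Up^T = 1%:M by rewrite /Up map_trmx -map_mxM UUt map_mx1.
have cA : char_poly_mx A = Up *m char_poly_mx (diag_mx d) *m Up^T.
  rewrite /char_poly_mx mulmxBr mulmxBl mul_mx_scalar -scalemxAl UpUp scalemx1.
  by rewrite Aeq !map_mxM /Up map_trmx.
rewrite /char_poly cA !det_mulmx mulrAC -det_mulmx UpUp det1 mul1r.
rewrite -/(char_poly _) char_poly_trig ?diag_mx_is_trig //.
by apply: eq_bigr => i _; rewrite mxE eqxx.
Qed.

Lemma sum_decomp_eq n (A U V : 'M[R]_n) (d e : 'rV[R]_n) (f : R -> R) :
  U^T *m U = 1%:M -> A = U *m diag_mx d *m U^T ->
  V^T *m V = 1%:M -> A = V *m diag_mx e *m V^T ->
  \sum_i f (d 0 i) = \sum_i f (e 0 i).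
Proof.
move=> UU Ad VV Ae.
have := char_poly_decomp UU Ad; rewrite (char_poly_decomp VV Ae).
rewrite -(big_map (fun i => d 0 i) xpredT (fun x => 'X - x%:P)).
rewrite -(big_map (fun i => e 0 i) xpredT (fun x => 'X - x%:P)).
move=> /prod_XsubC_eq p.
rewrite -(big_map (fun i => d 0 i) xpredT f) -(big_map (fun i => e 0 i) xpredT f).
by rewrite (perm_big _ p).
Qed.

Lemma tr_mxfun n (f : R -> R) (A U : 'M[R]_n) (d : 'rV[R]_n) :
  spec_decomp A (U, d) -> \tr (mxfun f A) = \sum_i f (d 0 i).
Proof.
move=> [/= UU Ad]; rewrite /mxfun; case: pselect => [h|]; last first.
  by move=> /(_ (ex_intro _ (U, d) (conj UU Ad))).
case: (cid h) => [[U' d'] [/= UU' Ad']] /=.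
rewrite mxtrace_mulC mulmxA UU' mul1mx mxtrace_diag.
rewrite [LHS](eq_bigr (fun j => f (d' 0 j))); last by move=> j _; rewrite mxE.
exact: (sum_decomp_eq f UU' Ad' UU Ad).
Qed.

Lemma lnconc (t x : R) : 0 <= t -> t <= 1 -> 0 < x -> t * ln x <= ln (t * x + (1 - t)).
Proof.
move=> t0 t1 x0; have := @concave_ln R (Itv01 t0 t1) x 1 x0 ltr01.
by rewrite !convRE /= ln1 mulr0 addr0 mulr1.
Qed.
Lemma expconv (t x : R) : 0 <= t -> t <= 1 -> expR (t * x) <= t * expR x + (1 - t).
Proof.
move=> t0 t1; have := @convex_expR R (Itv01 t0 t1) x 0.
by rewrite !convRE /= expR0 mulr0 addr0 mulr1.
Qed.

Definition gf (c d lam : R) := 1 - c / lam * d.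

Lemma gf_pos c d lam : 0 <= d -> 0 < lam -> c * d < lam -> 0 < gf c d lam.
Proof.
move=> d0 l0 cl; rewrite /gf subr_gt0 mulrAC ltr_pdivrMr // mul1r //.
Qed.

Lemma gf_le1 c d lam : 0 <= c -> 0 <= d -> 0 < lam -> gf c d lam <= 1.
Proof.
move=> c0 d0 l0; rewrite /gf lerBlDr lerDl; apply: mulr_ge0 => //.
by apply: divr_ge0 => //; apply: ltW.
Qed.

Lemma gf_conv c d l1 l2 : 0 < l1 -> l1 <= l2 ->
  gf c d l2 = (l1 / l2) * gf c d l1 + (1 - l1 / l2).
Proof.
move=> l10 l12; have l20 : 0 < l2 by apply: lt_le_trans l12.
rewrite /gf; field; apply/andP; split; apply: lt0r_neq0 => //.
Qed.

Lemma gf_mono c d l1 l2 : 0 <= c -> 0 <= d -> 0 < l1 -> l1 <= l2 ->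
  gf c d l1 <= gf c d l2.
Proof.
move=> c0 d0 l10 l12; have l20 : 0 < l2 by apply: lt_le_trans l12.
rewrite /gf lerD2l lerN2; apply: ler_wpM2r => //; apply: ler_wpM2l => //.
by rewrite lef_pV2 ?posrE.
Qed.

Lemma gf0 c lam : gf c 0 lam = 1.
Proof. by rewrite /gf mulr0 subr0. Qed.

Lemma gf_eq1 c d lam : 0 < c -> 0 < lam -> gf c d lam = 1 -> d = 0.
Proof.
move=> c0 l0 /eqP; rewrite /gf subr_eq addrC -subr_eq subrr eq_sym mulf_eq0.
case/orP => /eqP // h; exfalso; move: h; apply/eqP.
by apply: lt0r_neq0; apply: divr_gt0.
Qed.


Lemma aterm_pos c d lam : 0 <= d -> 0 < lam -> c * d < lam -> 0 < (gf c d lam)^-1.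
Proof. by move=> *; rewrite invr_gt0 gf_pos. Qed.

Lemma aterm_mono c d l1 l2 : 0 <= c -> 0 <= d -> 0 < l1 -> l1 <= l2 -> c * d < l1 ->
  (gf c d l2)^-1 <= (gf c d l1)^-1.
Proof.
move=> c0 d0 l10 l12 cl; have l20 : 0 < l2 by apply: lt_le_trans l12.
have g1 := gf_pos d0 l10 cl.
rewrite lef_pV2 ?posrE ?gf_mono //.
by apply: lt_le_trans (gf_mono c0 d0 l10 l12).
Qed.

Definition b0 (d lam : R) := - lam * ln (gf 1 d lam).

Lemma b0_ge0 d lam : 0 <= d -> 0 < lam -> 0 <= b0 d lam.
Proof.
move=> d0 l0; rewrite /b0 mulNr oppr_ge0 pmulr_rle0 //.
by apply: ln_le0; apply: gf_le1 => //; apply: ler01.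
Qed.

Lemma b0_eq0 d lam : 0 <= d -> 0 < lam -> 1 * d < lam -> b0 d lam = 0 -> d = 0.
Proof.
move=> d0 l0 cl /eqP; rewrite /b0 mulf_eq0 oppr_eq0 (negbTE (lt0r_neq0 l0)) /=.
rewrite ln_eq0 ?gf_pos // => /eqP; apply: gf_eq1 => //; exact: ltr01.
Qed.

Lemma b0_mono d l1 l2 : 0 <= d -> 0 < l1 -> l1 <= l2 -> 1 * d < l1 -> b0 d l2 <= b0 d l1.
Proof.
move=> d0 l10 l12 cl; have l20 : 0 < l2 by apply: lt_le_trans l12.
have g1 := gf_pos d0 l10 cl.
rewrite /b0 !mulNr lerN2 (gf_conv _ _ l10 l12).
have t0 : 0 <= l1 / l2 by apply: divr_ge0; apply: ltW.
have t1 : l1 / l2 <= 1 by rewrite ler_pdivrMr // mul1r.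
have := lnconc t0 t1 g1 => h.
have -> : l1 * ln (gf 1 d l1) = l2 * (l1 / l2 * ln (gf 1 d l1)).
  by field; apply: lt0r_neq0.
by apply: ler_wpM2l => //; apply: ltW.
Qed.

Lemma b0_0 lam : b0 0 lam = 0.
Proof. by rewrite /b0 gf0 ln1 mulr0. Qed.

Definition b1 (d lam : R) := lam * (expR (lam^-1 * d) - 1).

Lemma b1_ge0 d lam : 0 <= d -> 0 < lam -> 0 <= b1 d lam.
Proof.
move=> d0 l0; rewrite /b1 mulr_ge0 ?subr_ge0 //; first exact: ltW.
apply: le_trans (expR_ge1Dx _); rewrite lerDl mulr_ge0 // invr_ge0; exact: ltW.
Qed.

Lemma b1_eq0 d lam : 0 < lam -> b1 d lam = 0 -> d = 0.
Proof.
move=> l0 /eqP; rewrite /b1 mulf_eq0 (negbTE (lt0r_neq0 l0)) /= subr_eq0 => /eqP h.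
have : lam^-1 * d = 0 by rewrite -(expRK (lam^-1 * d)) h ln1.
move=> /eqP; rewrite mulf_eq0 invr_eq0 (negbTE (lt0r_neq0 l0)) /=; by move/eqP.
Qed.

Lemma b1_mono d l1 l2 : 0 <= d -> 0 < l1 -> l1 <= l2 -> b1 d l2 <= b1 d l1.
Proof.
move=> d0 l10 l12; have l20 : 0 < l2 by apply: lt_le_trans l12.
have t0 : 0 <= l1 / l2 by apply: divr_ge0; apply: ltW.
have t1 : l1 / l2 <= 1 by rewrite ler_pdivrMr // mul1r.
have := expconv (l1^-1 * d) t0 t1.
have -> : l1 / l2 * (l1^-1 * d) = l2^-1 * d by field; apply/andP; split; apply: lt0r_neq0.
move=> h; rewrite /b1.
have -> : l1 * (expR (l1^-1 * d) - 1) = l2 * (l1 / l2 * expR (l1^-1 * d) + (1 - l1 / l2) - 1).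
  by field; apply: lt0r_neq0.
by apply: ler_wpM2l; [apply: ltW | rewrite lerD2r].
Qed.

Lemma b1_0 lam : b1 0 lam = 0.
Proof. by rewrite /b1 mulr0 expR0 subrr mulr0. Qed.

Definition bm (tau d lam : R) := lam / tau * (gf (1 - tau) d lam `^ (tau / (tau - 1)) - 1).

Lemma powg_ge1 (tau g : R) : 0 < tau < 1 -> 0 < g <= 1 -> 1 <= g `^ (tau / (tau - 1)).
Proof.
move=> /andP[t0 t1] /andP[g0 g1]; rewrite /powR (negbTE (lt0r_neq0 g0)).
apply: le_trans (expR_ge1Dx _); rewrite lerDl; apply: mulr_le0.
  by rewrite pmulr_rle0 // invr_le0 subr_le0 ltW.
exact: ln_le0.
Qed.

Lemma bm_ge0 tau d lam : 0 < tau < 1 -> 0 <= d -> 0 < lam -> (1 - tau) * d < lam ->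
  0 <= bm tau d lam.
Proof.
move=> /[dup] tt /andP[t0 t1] d0 l0 cl; rewrite /bm mulr_ge0 //.
  by apply: divr_ge0; apply: ltW.
rewrite subr_ge0; apply: powg_ge1 => //; rewrite gf_pos ?gf_le1 //=; lra.
Qed.

Lemma bm_eq0 tau d lam : 0 < tau < 1 -> 0 <= d -> 0 < lam -> (1 - tau) * d < lam ->
  bm tau d lam = 0 -> d = 0.
Proof.
move=> /andP[t0 t1] d0 l0 cl /eqP.
rewrite /bm mulf_eq0 mulf_eq0 invr_eq0 (negbTE (lt0r_neq0 l0)) (negbTE (lt0r_neq0 t0)) /=.
have g0 := gf_pos d0 l0 cl.
rewrite subr_eq0 /powR (negbTE (lt0r_neq0 g0)) => /eqP h.
have : tau / (tau - 1) * ln (gf (1 - tau) d lam) = 0 by rewrite -(expRK (_ * _)) h ln1.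
move=> /eqP; rewrite mulf_eq0 mulf_eq0 invr_eq0 (negbTE (lt0r_neq0 t0)) /=.
have -> : (tau - 1 == 0) = false by apply/negbTE; apply: ltr0_neq0; rewrite subr_lt0.
rewrite /= ln_eq0 // => /eqP; apply: gf_eq1 => //; lra.
Qed.

Lemma bm_mono tau d l1 l2 : 0 < tau < 1 -> 0 <= d -> 0 < l1 -> l1 <= l2 ->
  (1 - tau) * d < l1 -> bm tau d l2 <= bm tau d l1.
Proof.
move=> /andP[t0 t1] d0 l10 l12 cl; have l20 : 0 < l2 by apply: lt_le_trans l12.
have g1 := gf_pos d0 l10 cl.
have c0 : 0 <= 1 - tau by lra.
have g2 : 0 < gf (1 - tau) d l2 by apply: lt_le_trans (gf_mono c0 d0 l10 l12).
set p := tau / (tau - 1).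
have p0 : p <= 0 by rewrite /p pmulr_rle0 // invr_le0 subr_le0 ltW.
have s0 : 0 <= l1 / l2 by apply: divr_ge0; apply: ltW.
have s1 : l1 / l2 <= 1 by rewrite ler_pdivrMr // mul1r.
set t := l1 / l2 in s0 s1.
have hl := lnconc s0 s1 g1.
rewrite -(gf_conv _ _ l10 l12) -/t in hl.
have key : gf (1 - tau) d l2 `^ p <= t * gf (1 - tau) d l1 `^ p + (1 - t).
  rewrite /powR (negbTE (lt0r_neq0 g1)) (negbTE (lt0r_neq0 g2)).
  apply: le_trans (expconv (p * ln (gf (1 - tau) d l1)) s0 s1).
  rewrite ler_expR mulrCA; apply: ler_wnM2l => //.
rewrite /bm.
have -> : l1 / tau * (gf (1 - tau) d l1 `^ p - 1) =
  l2 / tau * (t * gf (1 - tau) d l1 `^ p + (1 - t) - 1).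
  by rewrite /t; field; apply/andP; split; apply: lt0r_neq0.
apply: ler_wpM2l; first by apply: divr_ge0; apply: ltW.
by rewrite lerD2r.
Qed.

Lemma bm_0 tau lam : bm tau 0 lam = 0.
Proof. by rewrite /bm gf0 powR1 subrr mulr0. Qed.


Lemma qdiag n (U : 'M[R]_n) (g : 'rV[R]_n) (x : 'cV[R]_n) :
  qform (U *m diag_mx g *m U^T) x = \sum_j g 0 j * ((U^T *m x) j 0) ^+ 2.
Proof.
rewrite /qform.
have -> : x^T *m (U *m diag_mx g *m U^T) *m x =
    (U^T *m x)^T *m diag_mx g *m (U^T *m x) by rewrite trmx_mul trmxK !mulmxA.
rewrite mxE; apply: eq_bigr => j _; rewrite mul_mx_diag !mxE; ring.
Qed.

Lemma diag_affine n (a k : R) (d : 'rV[R]_n) :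
  diag_mx (\row_j (a + k * d 0 j)) = a%:M + k *: diag_mx d.
Proof.
apply/matrixP => i j; rewrite !mxE; case: (eqVneq i j) => [->|ne].
  by rewrite !mulr1n.
by rewrite !mulr0n mulr0 addr0.
Qed.

Lemma decomp_affine n (U : 'M[R]_n) (d : 'rV[R]_n) (a k : R) :
  U *m U^T = 1%:M ->
  a *: 1%:M + k *: (U *m diag_mx d *m U^T) = U *m diag_mx (\row_j (a + k * d 0 j)) *m U^T.
Proof.
move=> UUt; rewrite diag_affine mulmxDr mulmxDl mul_mx_scalar -scalemxAl UUt.
by rewrite -!scalemxAr -scalemxAl.
Qed.

Lemma decomp_scale n (U : 'M[R]_n) (d : 'rV[R]_n) (k : R) :
  k *: (U *m diag_mx d *m U^T) = U *m diag_mx (\row_j (k * d 0 j)) *m U^T.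
Proof.
have -> : diag_mx (\row_j (k * d 0 j)) = k *: diag_mx d.
  by apply/matrixP => i j; rewrite !mxE mulrnAr.
by rewrite -scalemxAr -scalemxAl.
Qed.

Lemma decomp_one n (U : 'M[R]_n) : U *m U^T = 1%:M ->
  (1%:M : 'M[R]_n) = U *m diag_mx (\row_j (1 : R)) *m U^T.
Proof.
move=> UUt; have := decomp_affine (0 : 'rV[R]_n) 1 0 UUt.
rewrite scale1r scale0r addr0 => ->; congr (_ *m diag_mx _ *m _).
by apply/rowP => j; rewrite !mxE mul0r addr0.
Qed.

Lemma invmx_decomp n (U : 'M[R]_n) (g : 'rV[R]_n) :
  U^T *m U = 1%:M -> (forall j, g 0 j != 0) ->
  invmx (U *m diag_mx g *m U^T) = U *m diag_mx (\row_j (g 0 j)^-1) *m U^T.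
Proof.
move=> UU g0.
have P : U *m diag_mx g *m U^T *m (U *m diag_mx (\row_j (g 0 j)^-1) *m U^T) = 1%:M.
  rewrite !mulmxA -(mulmxA _ U^T U) UU mulmx1 -(mulmxA _ (diag_mx g)).
  have -> : diag_mx g *m diag_mx (\row_j (g 0 j)^-1) = 1%:M.
    apply/matrixP => i j; rewrite mul_mx_diag !mxE; case: (eqVneq i j) => [->|ne].
      by rewrite !mulr1n mulfV.
    by rewrite !mulr0n mul0r.
  by rewrite mulmx1; apply: mulmx1C.
have [Au _] := mulmx1_unit P.
by rewrite -[LHS]mulmx1 -P (mulmxA (invmx _)) mulVmx // mul1mx.
Qed.

Lemma det_decomp n (U : 'M[R]_n) (g : 'rV[R]_n) :
  U^T *m U = 1%:M -> \det (U *m diag_mx g *m U^T) = \prod_j g 0 j.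
Proof.
move=> UU; rewrite !det_mulmx det_diag mulrAC -det_mulmx.
by rewrite (mulmx1C UU) det1 mul1r.
Qed.

Lemma ln_prod n (g : 'I_n -> R) : (forall j, 0 < g j) ->
  ln (\prod_j g j) = \sum_j ln (g j).
Proof.
move=> gp.
apply: (proj2 (big_rec2 (fun p s => 0 < p /\ ln p = s) _ _)).
  by split; [apply: ltr01 | apply: ln1].
move=> i p s _ [p0 <-]; split; first by apply: mulr_gt0.
by rewrite lnM ?posrE.
Qed.

Lemma tr_mxfun' n (f : R -> R) (U : 'M[R]_n) (d : 'rV[R]_n) :
  U^T *m U = 1%:M -> \tr (mxfun f (U *m diag_mx d *m U^T)) = \sum_i f (d 0 i).
Proof. by move=> UU; exact: (@tr_mxfun n f _ U d (conj UU erefl)). Qed.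

Lemma tr_sub1 n (X : 'M[R]_n) : \tr (X - 1%:M) = \tr X - n%:R.
Proof. by rewrite raddfB /= mxtrace1. Qed.

Lemma sum_sub1 n (f : 'I_n -> R) : \sum_j f j - n%:R = \sum_j (f j - 1).
Proof. by rewrite sumrB sumr_const card_ord. Qed.

Lemma qdelta n (g : 'rV[R]_n) i :
  \sum_j g 0 j * ((delta_mx i 0 : 'cV[R]_n) j 0) ^+ 2 = g 0 i.
Proof.
rewrite (bigD1 i) //= big1 => [|j ne]; first by rewrite !mxE !eqxx /= expr1n mulr1 addr0.
by rewrite !mxE (negbTE ne) /= expr0n mulr0.
Qed.

Lemma d_le_spec n (K U : 'M[R]_n) (d : 'rV[R]_n) :
  U^T *m U = 1%:M -> K = U *m diag_mx d *m U^T -> forall i, d 0 i <= specnorm K.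
Proof.
move=> UU Kd i; have UUt := mulmx1C UU.
have KtK : K^T *m K = U *m diag_mx (\row_j (d 0 j ^+ 2)) *m U^T.
  rewrite Kd !trmx_mul trmxK tr_diag_mx !mulmxA -(mulmxA _ U^T U) UU mulmx1.
  rewrite -(mulmxA U (diag_mx d) (diag_mx d)); congr (_ *m _ *m _).
  apply/matrixP => a b; rewrite mul_mx_diag !mxE; case: (eqVneq a b) => [->|ne].
    by rewrite !mulr1n expr2.
  by rewrite !mulr0n mul0r.
set T := \sum_j d 0 j ^+ 2.
have ub : forall x, qform 1%:M x = 1 -> Num.sqrt (qform (K^T *m K) x) <= 1 + T.
  move=> x; rewrite (decomp_one UUt) !qdiag KtK qdiag => h1.
  set q := \sum_j _.
  have q0 : 0 <= q by apply: sumr_ge0 => j _; rewrite mxE mulr_ge0 // sqr_ge0.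
  have qT : q <= T.
    apply: ler_sum => j _; rewrite mxE ler_piMr ?sqr_ge0 //.
    rewrite -h1 (bigD1 j) //= mxE mul1r lerDl; apply: sumr_ge0 => k _.
    by rewrite mxE mul1r sqr_ge0.
  apply: le_trans (_ : 1 + q <= 1 + T); last by rewrite lerD2l.
  have s0 := sqrtr_ge0 q; have := sqr_sqrtr q0; set s := Num.sqrt q => sq.
  rewrite -sq; nra.
pose x := U *m (delta_mx i 0 : 'cV[R]_n).
have yx : U^T *m x = delta_mx i 0 by rewrite /x mulmxA UU mul1mx.
have x1 : qform 1%:M x = 1 by rewrite (decomp_one UUt) qdiag yx qdelta mxE.
have xq : qform (K^T *m K) x = d 0 i ^+ 2 by rewrite KtK qdiag yx qdelta mxE.
apply: le_trans (ler_norm (d 0 i)) _; rewrite -sqrtr_sqr -xq.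
apply: sup_upper_bound; last by exists x.
split; first by exists (Num.sqrt (qform (K^T *m K) x)); exists x.
by exists (1 + T) => y [z hz <-]; apply: ub.
Qed.

Lemma spec0_le n : specnorm (0 : 'M[R]_n) <= 0.
Proof.
rewrite /specnorm; set S := (X in sup X).
have S0 : forall y, S y -> y = 0.
  by move=> y [x _ <-]; rewrite /qform trmx0 !mulmx0 mul0mx mxE sqrtr0.
case: (pselect (S !=set0)) => [ne|e].
  apply: (ge_sup ne) => y /S0 ->; done.
have -> : S = set0 by apply/seteqP; split => y // Sy; apply: e; exists y.
by rewrite sup0.
Qed.

Definition aT (tau d lam : R) := if tau == 1 then 1 else (gf (1 - tau) d lam)^-1.
Definition bT (tau d lam : R) :=
  if tau == 0 then b0 d lam else if tau == 1 then b1 d lam else bm tau d lam.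

Lemma Hfin_sum n tau (m : 'cV[R]_n) (K U : 'M[R]_n) (d : 'rV[R]_n) lam :
  U^T *m U = 1%:M -> K = U *m diag_mx d *m U^T -> 0 < lam ->
  (forall j, 0 < gf (1 - tau) (d 0 j) lam) ->
  Hfin tau m K lam =
    \sum_j (aT tau (d 0 j) lam * ((U^T *m m) j 0) ^+ 2 + bT tau (d 0 j) lam).
Proof.
move=> UU Kd l0 gp; have UUt := mulmx1C UU.
have gn0 : forall j, (\row_j gf (1 - tau) (d 0 j) lam) 0 j != 0.
  by move=> j; rewrite mxE; apply: lt0r_neq0.
have M : 1%:M - ((1 - tau) / lam) *: K = U *m diag_mx (\row_j gf (1 - tau) (d 0 j) lam) *m U^T.
  rewrite (_ : 1%:M - _ = 1 *: 1%:M + (- ((1 - tau) / lam)) *: K); last first.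
    by rewrite scale1r scaleNr.
  rewrite Kd decomp_affine //; congr (_ *m diag_mx _ *m _).
  by apply/rowP => j; rewrite !mxE /gf mulNr.
rewrite /Hfin /aT /bT; case: (eqVneq tau 0) => [t0|tn0].
  subst tau; rewrite (_ : (0:R) == 1 = false) ?(eq_sym 0) ?oner_eq0 //.
  move: M gn0 gp; rewrite subr0 div1r => M gn0 gp.
  rewrite M invmx_decomp // qdiag det_decomp // ln_prod; last by move=> j; rewrite mxE.
  rewrite mulr_sumr -sumrB; apply: eq_bigr => j _.
  by rewrite !mxE /b0 mulNr.
case: (eqVneq tau 1) => [t1|tn1].
  subst tau; rewrite Kd decomp_scale tr_sub1 (tr_mxfun' _ _ UU) sum_sub1.
  rewrite (decomp_one UUt) qdiag mulr_sumr -big_split /=; apply: eq_bigr => j _.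
  by rewrite !mxE /b1.
rewrite M invmx_decomp // qdiag tr_sub1 (tr_mxfun' _ _ UU) sum_sub1.
rewrite mulr_sumr -big_split /=; apply: eq_bigr => j _.
by rewrite !mxE /bm.
Qed.

Section Combined.
Variables (tau d : R).
Hypotheses (t0 : 0 <= tau) (t1 : tau <= 1) (d0 : 0 <= d).

Let mid : tau != 0 -> tau != 1 -> 0 < tau < 1.
Proof. by move=> h0 h1; rewrite !lt_neqAle t0 t1 eq_sym h0 h1. Qed.

Lemma aT_pos lam : 0 < lam -> (1 - tau) * d < lam -> 0 < aT tau d lam.
Proof. by move=> l0 cl; rewrite /aT; case: ifP => // _; apply: aterm_pos. Qed.

Lemma aT_mono l1 l2 : 0 < l1 -> l1 <= l2 -> (1 - tau) * d < l1 ->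
  aT tau d l2 <= aT tau d l1.
Proof.
move=> l10 l12 cl; rewrite /aT; case: ifP => // _.
by apply: aterm_mono => //; rewrite subr_ge0.
Qed.

Lemma bT_ge0 lam : 0 < lam -> (1 - tau) * d < lam -> 0 <= bT tau d lam.
Proof.
move=> l0 cl; rewrite /bT; case: (eqVneq tau 0) => [_|h0]; first exact: b0_ge0.
case: (eqVneq tau 1) => [_|h1]; first exact: b1_ge0.
exact: bm_ge0 (mid h0 h1) d0 l0 cl.
Qed.

Lemma bT_eq0 lam : 0 < lam -> (1 - tau) * d < lam -> bT tau d lam = 0 -> d = 0.
Proof.
move=> l0 cl; rewrite /bT; case: (eqVneq tau 0) => [t00|h0].
  by apply: b0_eq0 => //; move: cl; rewrite t00 subr0.
case: (eqVneq tau 1) => [_|h1]; first exact: b1_eq0.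
exact: bm_eq0 (mid h0 h1) d0 l0 cl.
Qed.

Lemma bT_mono l1 l2 : 0 < l1 -> l1 <= l2 -> (1 - tau) * d < l1 ->
  bT tau d l2 <= bT tau d l1.
Proof.
move=> l10 l12 cl; rewrite /bT; case: (eqVneq tau 0) => [t00|h0].
  by apply: b0_mono => //; move: cl; rewrite t00 subr0.
case: (eqVneq tau 1) => [_|h1]; first exact: b1_mono.
exact: bm_mono (mid h0 h1) d0 l10 l12 cl.
Qed.

End Combined.

Lemma bT_0 tau lam : bT tau 0 lam = 0.
Proof. by rewrite /bT; case: ifP => _; [apply: b0_0 | case: ifP => _; [apply: b1_0 | apply: bm_0]]. Qed.
End S.

Lemma d_eq (R : realType) n (K U : 'M[R]_n) (d : 'rV[R]_n) :
  U^T *m U = 1%:M -> K = U *m diag_mx d *m U^T ->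
  forall j, d 0 j = qform K (U *m delta_mx j 0).
Proof. by move=> UU Kd j; rewrite Kd qdiag mulmxA UU mul1mx qdelta. Qed.

Theorem proposition3 (R : realType) (n : nat) (tau : R)
  (m : 'cV[R]_n) (K : 'M[R]_n) :
  0 <= tau <= 1 -> psd K ->
  (* (i) nonnegativity, with equality iff e = 0 *)
  ((forall lam : R, (0 <= Htau tau m K lam)%E) /\
   (forall lam : R, 0 < lam -> (Htau tau m K lam = 0%E <-> (m = 0 /\ K = 0)))) /\
  (* (ii) lambda |-> H_tau(e, lambda) is monotone (non-)increasing *)
  (forall lam1 lam2 : R, lam1 <= lam2 -> (Htau tau m K lam2 <= Htau tau m K lam1)%E).
Proof.
move=> /andP[t0 t1] [Ks Kpsd].
have [U [d [UU Kd]]] := spectral_real Ks.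
have UUt := mulmx1C UU.
have dq := d_eq UU Kd.
have d0 : forall j, 0 <= d 0 j by move=> j; rewrite dq.
have dS := d_le_spec UU Kd.
have c0 : 0 <= 1 - tau by rewrite subr_ge0.
have domj : forall lam, (1 - tau) * specnorm K < lam -> forall j, (1 - tau) * d 0 j < lam.
  by move=> lam h j; apply: le_lt_trans h; apply: ler_wpM2l.
have gp : forall lam, 0 < lam -> (1 - tau) * specnorm K < lam ->
    forall j, 0 < gf (1 - tau) (d 0 j) lam.
  by move=> lam l0 h j; apply: gf_pos => //; apply: domj.
have HS := fun lam l0 h => @Hfin_sum R n tau m K U d lam UU Kd l0 (gp lam l0 h).
split; [split|].
- move=> lam; rewrite /Htau; case: ifP => [/andP[l0 h]|_]; last by [].
  rewrite lee_fin (HS _ l0 h); apply: sumr_ge0 => j _; apply: addr_ge0.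
    by apply: mulr_ge0; [apply: ltW; apply: aT_pos => //; apply: domj | apply: sqr_ge0].
  by apply: bT_ge0 => //; apply: domj.
- move=> lam l0; split.
    rewrite /Htau; case: ifP => [/andP[_ h]|_] // [].
    rewrite (HS _ l0 h) => /eqP; rewrite psumr_eq0 => [/allP H|j _]; last first.
      apply: addr_ge0; last by apply: bT_ge0 => //; apply: domj.
      by apply: mulr_ge0; [apply: ltW; apply: aT_pos => //; apply: domj | apply: sqr_ge0].
    have H' : forall j, aT tau (d 0 j) lam * (U^T *m m) j 0 ^+ 2 = 0 /\ bT tau (d 0 j) lam = 0.
      move=> j; have := H j (mem_index_enum _); rewrite /=.
      rewrite paddr_eq0; first by move=> /andP[/eqP -> /eqP ->].
        by apply: mulr_ge0; [apply: ltW; apply: aT_pos => //; apply: domj | apply: sqr_ge0].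
      by apply: bT_ge0 => //; apply: domj.
    split.
      rewrite -[m]mul1mx -UUt -mulmxA.
      have -> : U^T *m m = 0; last by rewrite mulmx0.
      apply/matrixP => j k; rewrite (ord1 k) [RHS]mxE.
      have [h1 _] := H' j; move/eqP: h1; rewrite mulf_eq0.
      rewrite (negbTE (lt0r_neq0 (@aT_pos R tau _ (d0 j) _ l0 (domj _ h j)))) /=.
      by rewrite sqrf_eq0 => /eqP.
    rewrite Kd (_ : d = 0) ?linear0 ?mulmx0 ?mul0mx //.
    apply/rowP => j; rewrite mxE.
    have [_ h2] := H' j; exact: (bT_eq0 t0 t1 (d0 j) l0 (domj _ h j) h2).
  move=> [m0 K0].
  have h : (1 - tau) * specnorm K < lam.
    rewrite K0; apply: le_lt_trans l0; rewrite mulr_ge0_le0 //; apply: spec0_le.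
  rewrite /Htau l0 h /= (HS _ l0 h); congr (_%:E); apply: big1 => j _.
  rewrite m0 mulmx0 mxE expr0n mulr0 add0r.
  by rewrite (_ : d 0 j = 0) ?bT_0 // dq K0 /qform mulmx0 mul0mx mxE.
- move=> l1 l2 l12; rewrite /Htau; case: (boolP ((0 < l1) && ((1 - tau) * specnorm K < l1))) => [/andP[l10 h1]|_]; last by rewrite leey.
  have l20 : 0 < l2 by apply: lt_le_trans l12.
  have h2 : (1 - tau) * specnorm K < l2 by apply: lt_le_trans l12.
  rewrite l20 h2 /= lee_fin (HS _ l10 h1) (HS _ l20 h2).
  apply: ler_sum => j _; apply: lerD; last by apply: bT_mono => //; apply: domj.
  apply: ler_wpM2r; first by apply: sqr_ge0.
  by apply: aT_mono => //; apply: domj.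
Qed.
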